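(* Let $\mathsf{A}=\{A_1,\ldots,A_\ell\}$ be a finite set of $d \times d$ matrices over $\mathbb{C}$, and let $\mathsf{R} \subseteq \mathsf{A}$ be the set of all elements of $\mathsf{A}$ which have rank greater than or equal to two. Suppose that either $\mathsf{R}$ is empty or $\varrho(\mathsf{R})<\varrho(\mathsf{A})$. Then there exist an integer $n \geq 1$ and indices $i_1,\ldots,i_n \in \{1,\ldots,\ell\}$ such that each element of $\mathsf{A}$ of rank exactly one appears at most once in the sequence $A_{i_1},\ldots,A_{i_n}$, and \[\varrho(\mathsf{A})=\rho(A_{i_1}\cdots A_{i_n})^{1/n}.\]
   Context: For a square matrix $A$, $\rho(A)$ denotes its ordinary spectral radius. For a nonempty bounded set $\mathsf{A}$ of $d\times d$ complex matrices, the joint spectral radius is \[\varrho(\mathsf{A})=\lim_{n \to \infty} \sup\left\{\left\|A_{i_n} \cdots A_{i_1}\right\|^{1/n} \colon A_{i_j} \in \mathsf{A}\right\},\] where $\|\cdot\|$ is any matrix norm (the limit exists and is independent of the norm). *)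

(* Defs.v *)
From HB Require Import structures.
From mathcomp Require Import all_boot all_order all_algebra.
From mathcomp Require Import all_classical all_reals all_analysis.
From mathcomp Require Import complex.

Set Implicit Arguments.
Unset Strict Implicit.
Unset Printing Implicit Defensive.

Import Order.TTheory GRing.Theory Num.Theory.
Import numFieldNormedType.Exports.
Local Open Scope ring_scope.
Local Open Scope classical_set_scope.

Definition cabs (R : realType) (z : R[i]) : R := ComplexField.Normc.normc z.

(* Ordinary spectral radius: the supremum (= maximum, the set is finite)
   of the moduli of the eigenvalues of A (0 if d = 0). *)
Definition specrad (R : realType) (d : nat) (A : 'M[R[i]]_d) : R :=
  sup [set cabs a | a in [set a : R[i] | eigenvalue A a]].

(* A fixed matrix norm: the maximal absolute row sum (operator infinity norm).
   The joint spectral radius does not depend on the chosen norm. *)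
Definition mxnorm (R : realType) (d : nat) (A : 'M[R[i]]_d) : R :=
  \big[Num.max/0]_(i < d) \sum_(j < d) cabs (A i j).

Definition mxprod (R : realType) (d : nat) (s : seq 'M[R[i]]_d) : 'M[R[i]]_d :=
  foldr (fun M N => M *m N) 1%:M s.

Definition jsr_n (R : realType) (d : nat) (S : seq 'M[R[i]]_d) (n : nat) : R :=
  \big[Num.max/0]_(t : n.-tuple 'I_(size S))
     (mxnorm (mxprod [seq nth 0 S (nat_of_ord k) | k <- tval t])) `^ (n%:R^-1).

Definition jsr (R : realType) (d : nat) (S : seq 'M[R[i]]_d) : R :=
  limn (jsr_n S).

(* Main.v *)
Set Warnings "-all".
Require Import Defs.
From HB Require Import structures.
From mathcomp Require Import all_boot all_order all_algebra.
From mathcomp Require Import all_classical all_reals all_analysis.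
From mathcomp Require Import complex.
From mathcomp Require Import ring lra zify.
Import Order.TTheory GRing.Theory Num.Theory.
Local Open Scope ring_scope.
Set Implicit Arguments.
Unset Strict Implicit.
Section Basic.
Variable R : realType.

Lemma cabs_ge0 (z : R[i]) : 0 <= cabs z.
Proof. by case: z => a b; rewrite /cabs /=; exact: sqrtr_ge0. Qed.

Lemma cabsM (x y : R[i]) : cabs (x * y) = cabs x * cabs y.
Proof. exact: ComplexField.Normc.normcM. Qed.

Lemma cabsD (x y : R[i]) : cabs (x + y) <= cabs x + cabs y.
Proof. exact: le_normcD. Qed.

Lemma cabs0 : cabs (0 : R[i]) = 0.
Proof. exact: ComplexField.Normc.normc0. Qed.

Lemma cabs1 : cabs (1 : R[i]) = 1.
Proof. exact: ComplexField.Normc.normc1. Qed.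

Lemma cabs_eq0 (z : R[i]) : cabs z = 0 -> z = 0.
Proof. exact: ComplexField.Normc.eq0_normc. Qed.

Lemma cabsX (z : R[i]) n : cabs (z ^+ n) = cabs z ^+ n.
Proof. by elim: n => [|n IH]; rewrite ?expr0 ?cabs1 // !exprS cabsM IH. Qed.

Lemma cabs_sum (I : Type) (r : seq I) (P : pred I) (F : I -> R[i]) :
  cabs (\sum_(i <- r | P i) F i) <= \sum_(i <- r | P i) cabs (F i).
Proof.
elim/big_ind2: _ => //; first by rewrite cabs0.
move=> x1 x2 y1 y2 h1 h2; apply: le_trans (cabsD _ _) _; exact: lerD.
Qed.

Variable d : nat.
Local Notation M := 'M[R[i]]_d.

Definition rsum (A : M) i := \sum_(j < d) cabs (A i j).

Lemma rsum_ge0 (A : M) i : 0 <= rsum A i.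
Proof. by apply: sumr_ge0 => j _; exact: cabs_ge0. Qed.

Lemma mxnorm_ge0 (A : M) : 0 <= mxnorm A.
Proof.
rewrite /mxnorm; elim/big_ind: _ => //.
- by move=> x y hx hy; rewrite le_max hx.
- by move=> i _; exact: rsum_ge0.
Qed.

Lemma rsum_le_mxnorm (A : M) i : rsum A i <= mxnorm A.
Proof. rewrite /mxnorm /rsum.
have := (@le_bigmax _ _ _ (0:R) (fun i => \sum_(j<d) cabs (A i j)) i).
move=> h. exact: h.
Qed.

Lemma mxnorm_le (A : M) b : 0 <= b -> (forall i, rsum A i <= b) -> mxnorm A <= b.
Proof. move=> b0 h; rewrite /mxnorm.
have := (@bigmax_le _ _ _ (index_enum 'I_d) (fun i => \sum_(j<d) cabs (A i j)) (0:R) b xpredT b0).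
move=> h'; apply: h' => i _; exact: h.
Qed.

Lemma mxnormM (A B : M) : mxnorm (A *m B) <= mxnorm A * mxnorm B.
Proof.
apply: mxnorm_le; first by rewrite mulr_ge0 ?mxnorm_ge0.
move=> i; rewrite /rsum.
apply: (@le_trans _ _ (\sum_(j < d) \sum_(k < d) cabs (A i k) * cabs (B k j))).
  apply: ler_sum => j _; rewrite mxE; apply: le_trans (cabs_sum _ _ _) _.
  by apply: ler_sum => k _; rewrite cabsM.
rewrite exchange_big /=.
apply: (@le_trans _ _ (\sum_(k < d) cabs (A i k) * mxnorm B)).
  apply: ler_sum => k _; rewrite -mulr_sumr; apply: ler_wpM2l; first exact: cabs_ge0.
  exact: rsum_le_mxnorm.
rewrite -mulr_suml; apply: ler_wpM2r; first exact: mxnorm_ge0.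
exact: rsum_le_mxnorm.
Qed.

Lemma mxnormZ (a : R[i]) (A : M) : mxnorm (a *: A) <= cabs a * mxnorm A.
Proof.
apply: mxnorm_le; first by rewrite mulr_ge0 ?mxnorm_ge0 ?cabs_ge0.
move=> i; rewrite /rsum.
under eq_bigr do rewrite mxE cabsM.
rewrite -mulr_sumr; apply: ler_wpM2l; first exact: cabs_ge0.
exact: rsum_le_mxnorm.
Qed.

Lemma mxnorm0 : mxnorm (0 : M) = 0.
Proof.
apply/eqP; rewrite eq_le mxnorm_ge0 andbT; apply: mxnorm_le => // i.
by rewrite /rsum big1 // => j _; rewrite mxE cabs0.
Qed.

Lemma mxnorm1 : mxnorm (1%:M : M) <= 1.
Proof.
apply: mxnorm_le => // i; rewrite /rsum (bigD1 i) //= big1 ?addr0.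
  by rewrite mxE eqxx cabs1.
by move=> j /negbTE ji; rewrite mxE eq_sym ji cabs0.
Qed.

Definition vn (x : 'rV[R[i]]_d) := \sum_(j < d) cabs (x 0 j).

Lemma vn_mul (x : 'rV[R[i]]_d) (A : M) : vn (x *m A) <= vn x * mxnorm A.
Proof.
rewrite /vn.
apply: (@le_trans _ _ (\sum_(j < d) \sum_(k < d) cabs (x 0 k) * cabs (A k j))).
  apply: ler_sum => j _; rewrite mxE; apply: le_trans (cabs_sum _ _ _) _.
  by apply: ler_sum => k _; rewrite cabsM.
rewrite exchange_big /= mulr_suml.
apply: ler_sum => k _; rewrite -mulr_sumr; apply: ler_wpM2l; first exact: cabs_ge0.
exact: rsum_le_mxnorm.
Qed.

Lemma vnZ (a : R[i]) x : vn (a *: x) = cabs a * vn x.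
Proof. by rewrite /vn mulr_sumr; apply: eq_bigr => j _; rewrite mxE cabsM. Qed.

Lemma vn_gt0 (x : 'rV[R[i]]_d) : x != 0 -> 0 < vn x.
Proof.
move=> x0; rewrite lt_def; apply/andP; split; last by apply: sumr_ge0 => j _; exact: cabs_ge0.
apply/negP => /eqP /eqP; rewrite psumr_eq0; last by move=> j _; exact: cabs_ge0.
move=> /allP h; move/negP: x0; apply; apply/eqP/matrixP => i j.
rewrite ord1 mxE; apply: cabs_eq0; apply/eqP; apply: h; exact: mem_index_enum.
Qed.

Lemma eigen_le (A : M) a : eigenvalue A a -> cabs a <= mxnorm A.
Proof.
move=> /eigenvalueP [x xA x0].
have := vn_mul x A; rewrite xA vnZ => h.
have v0 := @vn_gt0 x x0.
by rewrite -(ler_pM2r v0) [X in _ <= X]mulrC.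
Qed.

End Basic.

Section Words.
Variable R : realType.
Variable d : nat.
Local Notation M := 'M[R[i]]_d.

Lemma mxprod_cat (s1 s2 : seq M) : mxprod (s1 ++ s2) = mxprod s1 *m mxprod s2.
Proof.
elim: s1 => [|A s1 IH] /=; first by rewrite mul1mx.
by rewrite IH mulmxA.
Qed.

Definition Fm (S : seq M) m := \big[Num.max/0]_(t : m.-tuple 'I_(size S))
     mxnorm (mxprod [seq nth 0 S (nat_of_ord k) | k <- tval t]).

Lemma word_tuple (S : seq M) (w : seq M) : all (mem S) w ->
  exists t : (size w).-tuple 'I_(size S), [seq nth 0 S (nat_of_ord k) | k <- tval t] = w.
Proof.
elim: w => [|A w IH] /=; first by move=> _; exists [tuple].
move=> /andP [AS wS]; have [t ht] := IH wS.
have hA : (index A S < size S)%N by rewrite index_mem.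
exists [tuple of Ordinal hA :: t] => /=.
by rewrite ht nth_index.
Qed.

Lemma Fm_ge0 S m : 0 <= Fm S m.
Proof.
rewrite /Fm; elim/big_ind: _ => //.
- by move=> x y hx hy; rewrite le_max hx.
- by move=> i _; exact: mxnorm_ge0.
Qed.

Lemma wordF (S : seq M) w : all (mem S) w -> mxnorm (mxprod w) <= Fm S (size w).
Proof.
move=> /word_tuple [t ht]; rewrite /Fm.
have := (@le_bigmax _ _ _ (0:R) (fun t : (size w).-tuple 'I_(size S) => mxnorm (mxprod [seq nth 0 S (nat_of_ord k) | k <- tval t])) t).
rewrite /= ht => h; exact: h.
Qed.

Lemma Fm_le (S : seq M) m b : 0 <= b ->
  (forall w, all (mem S) w -> size w = m -> mxnorm (mxprod w) <= b) -> Fm S m <= b.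
Proof.
move=> b0 h; rewrite /Fm.
have := (@bigmax_le _ _ _ (index_enum (m.-tuple 'I_(size S)))
   (fun t : m.-tuple 'I_(size S) => mxnorm (mxprod [seq nth 0 S (nat_of_ord k) | k <- tval t])) (0:R) b xpredT b0).
move=> h'; apply: h' => t _; apply: h; last by rewrite size_map size_tuple.
by apply/allP => x /mapP [k _ ->]; apply: mem_nth.
Qed.

Lemma Fm_sub (S : seq M) m n : Fm S (m + n) <= Fm S m * Fm S n.
Proof.
apply: Fm_le; first by rewrite mulr_ge0 ?Fm_ge0.
move=> w wS sw; rewrite -(cat_take_drop m w) mxprod_cat.
apply: le_trans (mxnormM _ _) _.
move: wS; rewrite -{1}(cat_take_drop m w) all_cat => /andP [h1 h2].
apply: ler_pM; try exact: mxnorm_ge0.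
- by have := wordF h1; rewrite size_takel // sw leq_addr.
- by have := wordF h2; rewrite size_drop sw addKn.
Qed.

Lemma jsr_nE (S : seq M) m : (0 < m)%N -> jsr_n S m = Fm S m `^ (m%:R^-1).
Proof.
move=> m0; rewrite /jsr_n /Fm.
set a : R := m%:R^-1.
have a0 : a != 0 by rewrite invr_eq0 pnatr_eq0 -lt0n.
have a0' : 0 <= a by rewrite invr_ge0.
suff: (\big[Num.max/0]_(t : m.-tuple 'I_(size S))
        mxnorm (mxprod [seq nth 0 S (nat_of_ord k) | k <- tval t]) `^ a =
      (\big[Num.max/0]_(t : m.-tuple 'I_(size S))
        mxnorm (mxprod [seq nth 0 S (nat_of_ord k) | k <- tval t])) `^ a) /\
      0 <= \big[Num.max/0]_(t : m.-tuple 'I_(size S))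
        mxnorm (mxprod [seq nth 0 S (nat_of_ord k) | k <- tval t]) by case.
apply: (big_ind2 (fun y x => y = x `^ a /\ 0 <= x)).
- by rewrite powR0.
- move=> y1 x1 y2 x2 [-> h1] [-> h2]; split; last by rewrite le_max h1.
  have [h|h] := leP x1 x2.
  + rewrite max_r //; exact: ge0_ler_powR.
  + rewrite max_l //; apply: ge0_ler_powR => //; exact: ltW.
- by move=> t _; split=> //; exact: mxnorm_ge0.
Qed.

End Words.

Section Real.
Variable R : realType.

Lemma bern (x : R) n : 1 <= x -> 1 + n%:R * (x - 1) <= x ^+ n.
Proof.
move=> x1; elim: n => [|n IH]; first by rewrite mul0r addr0 expr0.
rewrite exprS -natr1.
have h : 0 <= x - 1 by rewrite subr_ge0.
have h2 : 0 <= n%:R * (x - 1) ^+ 2 :> R by rewrite mulr_ge0 ?sqr_ge0.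
apply: (@le_trans _ _ (x * (1 + n%:R * (x - 1)))); last first.
  by apply: ler_wpM2l => //; apply: le_trans x1.
have e : x * (1 + n%:R * (x - 1)) - (1 + (n%:R + 1) * (x - 1)) = n%:R * (x - 1) ^+ 2.
  by rewrite expr2; ring.
by rewrite -subr_ge0 e.
Qed.

Lemma big_nat_gt (y : R) : exists N : nat, forall n, (N <= n)%N -> y <= n%:R.
Proof.
exists (Num.trunc `|y|).+1 => n hn.
apply: (@le_trans _ _ `|y|); first exact: ler_norm.
apply: (@le_trans _ _ ((Num.trunc `|y|).+1)%:R); first exact: ltW (truncnS_gt _).
by rewrite ler_nat.
Qed.

Lemma geo_eventually (a b K : R) : 0 <= a -> a < b ->
  exists Q, forall q, (Q <= q)%N -> a ^+ q * K <= b ^+ q.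
Proof.
move=> a0 ab; have b0 : 0 < b by apply: le_lt_trans ab.
have [->|an0] := eqVneq a 0.
  exists 1%N => q q1; rewrite expr0n; case: q q1 => // q _ /=.
  by rewrite mul0r exprn_ge0 // ltW.
have ap : 0 < a by rewrite lt_def an0.
set x := b / a.
have x1 : 1 < x by rewrite /x ltr_pdivlMr // mul1r.
have [N hN] := big_nat_gt (K / (x - 1)).
exists N => q hq.
have xq : K <= x ^+ q.
  have := hN q hq; rewrite ler_pdivrMr ?subr_gt0 // => h.
  apply: le_trans h _; apply: le_trans (bern q (ltW x1)).
  by rewrite lerDr.
have -> : b = a * x by rewrite /x mulrCA divff ?mulr1.
rewrite exprMn; apply: ler_wpM2l; first exact: exprn_ge0.
exact: xq.
Qed.

Lemma fekete_core (f : nat -> R) :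
  (forall m, 0 <= f m) -> (forall m n, f (m + n)%N <= f m * f n) ->
  forall k (c0 c : R), (0 < k)%N -> 0 <= c0 -> c0 < c -> f k <= c0 ^+ k ->
  exists N, forall m, (N <= m)%N -> f m <= c ^+ m.
Proof.
move=> f0 fsub k c0 c k0 c00 c0c fk.
have c0' : 0 < c by apply: le_lt_trans c0c.
set Mx := 1 + \sum_(r < k) f r.
have Mx1 : 1 <= Mx by rewrite lerDl sumr_ge0.
have fr : forall r, (r < k)%N -> f r <= Mx.
  move=> r rk; apply: le_trans (ler_wpDl ler01 (le_refl _)).
  rewrite (bigD1 (Ordinal rk)) //=; apply: ler_wpDr => //.
  by apply: sumr_ge0.
have fq : forall q r, f (q * k + r)%N <= (c0 ^+ k) ^+ q * f r.
  elim=> [|q IH] r; first by rewrite ?mul0n ?add0n expr0 mul1r.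
  rewrite mulSn -addnA; apply: le_trans (fsub _ _) _.
  rewrite exprS -mulrA; apply: ler_pM => //; exact: IH.
set mn := Num.min 1 c.
have mn0 : 0 < mn by rewrite lt_min ltr01.
have mn1 : mn <= 1 by rewrite ge_min lexx.
have mnc : mn <= c by rewrite ge_min lexx orbT.
set m0 := mn ^+ k.
have m00 : 0 < m0 by rewrite exprn_gt0.
have ak : 0 <= c0 ^+ k by rewrite exprn_ge0.
have abk : c0 ^+ k < c ^+ k by rewrite ltrXn2r // -lt0n.
have [Q hQ] := geo_eventually (Mx / m0) ak abk.
exists (Q * k)%N => m hm.
rewrite (divn_eq m k); set q := (m %/ k)%N; set r := (m %% k)%N.
have rk : (r < k)%N by rewrite ltn_mod.
have Qq : (Q <= q)%N by rewrite /q -(mulnK Q k0) leq_div2r.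
apply: le_trans (fq q r) _.
apply: (@le_trans _ _ ((c0 ^+ k) ^+ q * Mx)).
  by apply: ler_wpM2l; [exact: exprn_ge0 | exact: fr].
apply: (@le_trans _ _ ((c ^+ k) ^+ q * m0)).
  by move: (hQ q Qq); rewrite mulrA -ler_pdivlMr ?invr_gt0 // invrK.
rewrite exprD -exprM mulnC; apply: ler_wpM2l; first by rewrite exprn_ge0 // ltW.
apply: (@le_trans _ _ (mn ^+ r)).
  by apply: ler_wiXn2l => //; [exact: ltW | exact: ltnW].
by apply: lerXn2r => //; rewrite ?nnegrE ltW.
Qed.

Lemma powR_root (x : R) n : 0 <= x -> (0 < n)%N -> (x `^ (n%:R^-1)) ^+ n = x.
Proof.
move=> x0 n0; rewrite -powR_mulrn ?powR_ge0 // -powRrM mulVf ?powRr1 //.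
by rewrite pnatr_eq0 -lt0n.
Qed.

Lemma root_le (x c : R) n : (0 < n)%N -> 0 <= x -> 0 <= c -> x ^+ n <= c ^+ n -> x <= c.
Proof. by move=> n0 x0 c0; rewrite ler_pXn2r // nnegrE. Qed.

End Real.

Section JSR.
Variable R : realType.
Variable d : nat.
Local Notation M := 'M[R[i]]_d.
Local Open Scope classical_set_scope.

Lemma jsr_spec (S : seq M) : 0 <= jsr S /\
  (forall m, (0 < m)%N -> jsr S ^+ m <= Fm S m) /\
  (forall c, jsr S < c -> exists N, forall m, (N <= m)%N -> Fm S m <= c ^+ m).
Proof.
set G := fun m => Fm S m `^ (m%:R^-1).
set E := [set x | exists m, (0 < m)%N /\ x = G m].
set L := inf E.
have En : E !=set0 by exists (G 1%N); exists 1%N.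
have El : lbound E 0 by move=> x [m [_ ->]]; exact: powR_ge0.
have hl : has_lbound E by exists 0.
have L0 : 0 <= L by exact: lb_le_inf.
have J1 : forall m, (0 < m)%N -> L ^+ m <= Fm S m.
  move=> m m0; rewrite -(powR_root (Fm_ge0 S m) m0).
  apply: lerXn2r; rewrite ?nnegrE ?powR_ge0 //.
  by apply: ge_inf => //; exists m.
have J2 : forall c, L < c -> exists N, forall m, (N <= m)%N -> Fm S m <= c ^+ m.
  move=> c Lc; have [y [k [k0 ->]] yc] := inf_lt En Lc.
  apply: (@fekete_core R (Fm S) (@Fm_ge0 R d S) (@Fm_sub R d S) k (G k) c k0) => //.
    exact: powR_ge0.
  by rewrite /G powR_root // Fm_ge0.
have cv : (jsr_n S n @[n --> \oo]) --> L.
  apply/cvgrPdist_le => e e0.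
  have Le : L < L + e by rewrite ltrDl.
  have [N hN] := J2 _ Le.
  exists N.+1 => // n /= hn.
  have n0 : (0 < n)%N by apply: leq_trans hn.
  rewrite jsr_nE // -/(G n).
  have GL : L <= G n by apply: ge_inf => //; exists n.
  have Ge : G n <= L + e.
    apply: (root_le n0); rewrite ?powR_ge0 //; first by apply: addr_ge0 => //; exact: ltW.
    by rewrite /G powR_root ?Fm_ge0 //; apply: hN; apply: ltnW.
  rewrite ler0_norm ?subr_le0 //; lra.
have -> : jsr S = L by rewrite /jsr; exact: (norm_cvg_lim cv).
by split.
Qed.

End JSR.

Section Spec.
Variable R : realType.
Variable d : nat.
Local Notation M := 'M[R[i]]_d.
Local Open Scope classical_set_scope.

Lemma specrad_ub (A : M) a : eigenvalue A a -> cabs a <= specrad A.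
Proof.
move=> ea; rewrite /specrad.
have hub : has_ubound [set cabs a | a in [set a : R[i] | eigenvalue A a]].
  by exists (mxnorm A) => y [b eb <-]; exact: eigen_le.
by apply: ub_le_sup => //; exists a.
Qed.

Lemma specrad_le (A : M) b : 0 <= b -> (forall a, eigenvalue A a -> cabs a <= b) ->
  specrad A <= b.
Proof.
move=> b0 h; rewrite /specrad.
have [->|ne] := eqVneq [set cabs a | a in [set a : R[i] | eigenvalue A a]] set0.
  by rewrite sup0.
apply: ge_sup; first by apply/set0P.
by move=> y [a ea <-]; exact: h.
Qed.

Lemma specrad_ge0 (A : M) : 0 <= specrad A.
Proof.
rewrite /specrad.
have [->|ne] := eqVneq [set cabs a | a in [set a : R[i] | eigenvalue A a]] set0.
  by rewrite sup0.
have [y [a ea _]] := (set0P _).1 ne.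
apply: le_trans (specrad_ub ea); exact: cabs_ge0.
Qed.

Fixpoint rep (k : nat) (w : seq M) := if k is k'.+1 then w ++ rep k' w else [::].

Lemma size_rep k w : size (rep k w) = (k * size w)%N.
Proof. by elim: k => //= k IH; rewrite size_cat IH mulSn. Qed.

Lemma all_rep (S : seq M) k w : all (mem S) w -> all (mem S) (rep k w).
Proof. by move=> h; elim: k => //= k IH; rewrite all_cat h IH. Qed.

Lemma eig_rep (x : 'rV[R[i]]_d) a w k : x *m mxprod w = a *: x ->
  x *m mxprod (rep k w) = a ^+ k *: x.
Proof.
move=> h; elim: k => [|k IH] /=; first by rewrite mulmx1 expr0 scale1r.
by rewrite mxprod_cat mulmxA h -scalemxAl IH scalerA exprS.
Qed.

Lemma spec_le (S : seq M) w : all (mem S) w -> (0 < size w)%N ->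
  specrad (mxprod w) <= jsr S ^+ size w.
Proof.
move=> wS n0; have [t0 [J1 J2]] := jsr_spec S.
set t := jsr S; set n := size w.
apply: specrad_le; first exact: exprn_ge0.
move=> a /eigenvalueP [x xa x0].
set y := cabs a `^ (n%:R^-1).
have hy : forall c, t < c -> y <= c.
  move=> c tc; have c0 : 0 <= c by apply: le_trans (ltW tc).
  have [N hN] := J2 c tc.
  have k0 : (0 < N.+1)%N by [].
  have : cabs a ^+ N.+1 <= (c ^+ n) ^+ N.+1.
    rewrite -cabsX -exprM mulnC.
    have e : eigenvalue (mxprod (rep N.+1 w)) (a ^+ N.+1).
      by apply/eigenvalueP; exists x => //; apply: eig_rep.
    apply: le_trans (eigen_le e) _.
    apply: le_trans (wordF (all_rep N.+1 wS)) _.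
    rewrite size_rep; apply: hN.
    by rewrite -[X in (X <= _)%N]muln1 leq_mul.
  move=> h'; have h : cabs a <= c ^+ n.
    by apply: (root_le k0) => //; [exact: cabs_ge0 | exact: exprn_ge0].
  apply: (root_le n0); rewrite ?powR_ge0 //.
  by rewrite /y powR_root // cabs_ge0.
have yt : y <= t.
  case: (leP y t) => // ty.
  have m : t < (y + t) / 2 by rewrite ltr_pdivlMr //; lra.
  have := hy _ m; rewrite ler_pdivlMr //; lra.
by rewrite -(powR_root (cabs_ge0 a) n0) lerXn2r // nnegrE powR_ge0.
Qed.

End Spec.

Section Comb.
Variable R : realType.
Variable d : nat.
Local Notation M := 'M[R[i]]_d.

Lemma rank1_scalar (B X : M) : \rank B = 1%N -> exists k, B *m X *m B = k *: B.
Proof.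
move=> rB.
suff H : forall r (C : 'M[R[i]]_(d, r)) (W : 'M[R[i]]_(r, d)), r = 1%N -> C *m W = B ->
   exists k, B *m X *m B = k *: B.
  exact: (H _ (col_base B) (row_base B) rB (mulmx_base B)).
move=> r C W hr; subst r => <-.
set K := W *m X *m C.
exists (K 0 0).
have -> : C *m W *m X *m (C *m W) = C *m K *m W by rewrite /K !mulmxA.
by rewrite {1}[K]mx11_scalar mul_mx_scalar -scalemxAl.
Qed.

Lemma rank1_eig (B X : M) k : \rank B = 1%N -> B *m X *m B = k *: B ->
  eigenvalue (X *m B) k.
Proof.
move=> rB h.
have B0 : B != 0 by rewrite -mxrank_eq0 rB.
have [i hi] : exists i, row i B != 0.
  apply/not_existsP => hn; move/negP: B0; apply; apply/eqP/row_matrixP => i.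
  by have := hn i; rewrite linear0 => /negP; rewrite negbK => /eqP.
apply/eigenvalueP; exists (row i B) => //.
rewrite -row_mul mulmxA h; apply/rowP => j; by rewrite !mxE.
Qed.

Lemma split1w (p : pred M) w : has p w ->
  exists Y b Z, w = Y ++ b :: Z /\ p b /\ ~~ has p Y.
Proof.
elim: w => //= a w IH; case pa: (p a) => /= h.
  by exists [::], a, w.
have [Y [b [Z [-> [pb hY]]]]] := IH h.
by exists (a :: Y), b, Z; rewrite /= pa.
Qed.

Lemma split2w (p : pred M) w : (2 <= count p w)%N ->
  exists X a Y b Z, w = X ++ a :: Y ++ b :: Z /\ p a /\ p b.
Proof.
elim: w => //= a w IH; case pa: (p a) => /= h.
  have : has p w by rewrite has_count.
  move=> /split1w [Y [b [Z [-> [pb _]]]]].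
  by exists [::], a, Y, b, Z.
have [X [a' [Y [b [Z [-> [h1 h2]]]]]]] := IH h.
by exists (a :: X), a', Y, b, Z.
Qed.

Definition adm (w : seq M) := forall B : M, \rank B = 1%N -> (count (pred1 B) w <= 1)%N.

Lemma nonadm_factor w : ~ adm w ->
  exists X B Y Z, w = X ++ B :: Y ++ B :: Z /\ \rank B = 1%N /\ adm (Y ++ [:: B]).
Proof.
have [n le_w] := ubnP (size w); elim: n w le_w => // n IH w hw na.
have [B [rB cB]] : exists B, \rank B = 1%N /\ (2 <= count (pred1 B) w)%N.
  apply: contrapT => hn; apply: na => B rB; rewrite leqNgt; apply/negP => c2.
  by apply: hn; exists B.
have [X [a [Y [b [Z [ew [/eqP ea /eqP eb]]]]]]] := split2w cB.
subst a b.
have [h|h] := pselect (adm (Y ++ [:: B])).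
  by exists X, B, Y, Z.
have hs : (size (Y ++ [:: B]) < n)%N.
  move: hw; rewrite ew !size_cat /= size_cat /= => hw.
  rewrite addn1; lia.
have [X' [B' [Y' [Z' [e' [r' a']]]]]] := IH _ hs h.
exists (X ++ B :: X'), B', Y', (Z' ++ Z); split => //.
rewrite ew.
have -> : Y ++ B :: Z = (Y ++ [:: B]) ++ Z by rewrite -catA.
rewrite e'; by rewrite -!catA /= -?catA /= -?catA.
Qed.

Lemma bound_all (S : seq M) (K g : R) : 0 <= g -> 0 <= K ->
 (forall w, all (mem S) w -> adm w -> mxnorm (mxprod w) <= K * g ^+ size w) ->
 (forall B Y k, B \in S -> \rank B = 1%N -> all (mem S) Y -> adm (Y ++ [:: B]) ->
     B *m mxprod Y *m B = k *: B -> cabs k <= g ^+ (size Y).+1) ->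
 forall w, all (mem S) w -> mxnorm (mxprod w) <= K * g ^+ size w.
Proof.
move=> g0 K0 H1 H2 w.
have [n le_w] := ubnP (size w); elim: n w le_w => // n IH w hw wS.
have [h|h] := pselect (adm w); first exact: H1.
have [X [B [Y [Z [ew [rB aY]]]]]] := nonadm_factor h.
have [k hk] := rank1_scalar (mxprod Y) rB.
move: wS hw; rewrite ew !all_cat /= all_cat /= => /andP [XS /andP [BS /andP [YS /andP [_ ZS]]]] hw.
have e : mxprod (X ++ B :: Y ++ B :: Z) = k *: mxprod (X ++ B :: Z).
  rewrite !mxprod_cat /= mxprod_cat /= scalemxAr; congr (_ *m _).
  by rewrite !mulmxA hk scalemxAl.
rewrite e; apply: le_trans (mxnormZ _ _) _.
have hk' := H2 B Y k BS rB YS aY hk.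
have IH' : mxnorm (mxprod (X ++ B :: Z)) <= K * g ^+ size (X ++ B :: Z).
  apply: IH; last by rewrite all_cat /= XS BS ZS.
  move: hw; rewrite !size_cat /= size_cat /= => hw.
  lia.
apply: le_trans (ler_pM (cabs_ge0 _) (mxnorm_ge0 _) hk' IH') _.
rewrite !size_cat /= size_cat /= mulrCA -exprD; apply: ler_wpM2l => //.
have -> : ((size Y).+1 + (size X + (size Z).+1) = size X + (size Y + (size Z).+1).+1)%N by lia.
by [].
Qed.

End Comb.

Section More.
Variable R : realType.
Variable d : nat.
Local Notation M := 'M[R[i]]_d.
Local Notation rk1 := (fun B : M => \rank B == 1%N).

Lemma bound_count (S : seq M) (KR c D : R) : 1 <= KR -> 0 < c -> 1 <= D ->
 (forall B, B \in S -> mxnorm B <= D * c) ->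
 (forall X, all (mem S) X -> ~~ has rk1 X -> mxnorm (mxprod X) <= KR * c ^+ size X) ->
 forall Y, all (mem S) Y ->
   mxnorm (mxprod Y) <= KR ^+ (count rk1 Y).+1 * D ^+ count rk1 Y * c ^+ size Y.
Proof.
move=> K1 c0 D1 HB HX Y.
have K0 : 0 <= KR by apply: le_trans K1.
have D0 : 0 <= D by apply: le_trans D1.
have [n le_w] := ubnP (size Y); elim: n Y le_w => // n IH Y hY YS.
have [h|h] := boolP (has rk1 Y); last first.
  have -> : count rk1 Y = 0%N by apply/eqP; rewrite -leqn0 leqNgt -has_count.
  by rewrite expr1 expr0 mulr1; exact: HX.
have [X [B [Y' [eY [rB hX]]]]] := split1w h.
move: YS hY; rewrite eY all_cat /= => /andP [XS /andP [BS YS']] hY.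
have cX : count rk1 X = 0%N by apply/eqP; rewrite -leqn0 leqNgt -has_count.
rewrite count_cat cX /= rB add0n add1n mxprod_cat /= size_cat /=.
have IH' := IH Y' _ YS'.
move: hY; rewrite size_cat /= => hY.
have hn : (size Y' < n)%N by lia.
have {IH'}IH' := IH' hn.
apply: le_trans (mxnormM _ _) _.
apply: le_trans (ler_pM (mxnorm_ge0 _) (mxnorm_ge0 _) (HX X XS hX) (mxnormM _ _)) _.
apply: le_trans (ler_pM (mulr_ge0 K0 (exprn_ge0 _ (ltW c0))) (mulr_ge0 (mxnorm_ge0 _) (mxnorm_ge0 _)) (le_refl _) (ler_pM (mxnorm_ge0 _) (mxnorm_ge0 _) (HB B BS) IH')) _.
set q := count rk1 Y'; set a := size X; set b := size Y'.
rewrite le_eqVlt; apply/orP; left; apply/eqP.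
rewrite exprD (exprS c b) (exprS KR q.+1) (exprS D q).
move: (KR ^+ q.+1) (D ^+ q) (c ^+ a) (c ^+ b) => u v w z.
ring.
Qed.

Lemma uniq_of_count (s : seq M) : (forall x, count (pred1 x) s <= 1)%N -> uniq s.
Proof.
elim: s => //= a s IH h; apply/andP; split; last first.
  apply: IH => x; apply: leq_trans (h x); exact: leq_addl.
have := h a; rewrite /= eqxx add1n ltnS leqn0 => /eqP c0.
by rewrite -has_pred1 has_count c0.
Qed.

Lemma adm_count (S : seq M) Y : all (mem S) Y -> adm Y -> (count rk1 Y <= size S)%N.
Proof.
move=> YS aY; rewrite -size_filter; apply: uniq_leq_size.
  apply: uniq_of_count => x; rewrite count_filter.
  case rx: (\rank x == 1%N).
    apply: leq_trans (aY x (eqP rx)); apply: sub_count => y /= /andP [h _]; exact: h.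
  rewrite (@eq_count _ _ pred0) ?count_pred0 // => y /=.
  by apply/negP => /andP [/eqP -> h]; rewrite h in rx.
move=> x; rewrite mem_filter => /andP [_ xY]; exact: (allP YS).
Qed.

Lemma finmax (T : eqType) (s : seq T) (P : T -> Prop) (h : T -> R) (t : R) :
  (forall x, x \in s -> P x -> h x < t) ->
  exists g, g < t /\ forall x, x \in s -> P x -> h x <= g.
Proof.
elim: s => [|a s IH] H.
  by exists (t - 1); split => //; rewrite ltrBlDr ltrDl.
have H' : forall x, x \in s -> P x -> h x < t by move=> x xs; apply: H; rewrite inE xs orbT.
have [g [gt hg]] := IH H'.
have [pa|pa] := pselect (P a).
  exists (Num.max g (h a)); split.
    by rewrite gt_max gt H // mem_head.
  move=> x; rewrite inE => /orP [/eqP -> _|xs px].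
    by rewrite le_max lexx orbT.
  by rewrite le_max hg.
exists g; split => // x; rewrite inE => /orP [/eqP -> //|xs px].
exact: hg.
Qed.

Lemma zero_prod (X : seq M) : has (pred1 0) X -> mxprod X = 0.
Proof.
move=> /split1w [Y [b [Z [-> [/eqP -> _]]]]].
by rewrite mxprod_cat /= mul0mx mulmx0.
Qed.

Lemma sum_ge_term (S : seq M) (f : M -> R) B : (forall x, 0 <= f x) -> B \in S ->
  f B <= \sum_(x <- S) f x.
Proof.
move=> f0; elim: S => //= a S IH; rewrite inE big_cons => /orP [/eqP ->|h].
  by rewrite lerDl sumr_ge0.
by apply: le_trans (IH h) _; rewrite lerDr.
Qed.

End More.

Lemma expr_mono (R : realType) (x : R) m n : 1 <= x -> (m <= n)%N -> x ^+ m <= x ^+ n.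
Proof.
move=> x1 mn; rewrite -(subnKC mn) exprD; apply: ler_peMr.
  by apply: exprn_ge0; apply: le_trans x1.
exact: exprn_ege1.
Qed.

Unset Implicit Arguments.
Set Strict Implicit.

Theorem theorem1 (R : realType) (d l : nat) (A : 'I_l -> 'M[R[i]]_d) :
  (0 < l)%N ->
  let Aset := [seq A k | k <- enum 'I_l] in
  let Rset := [seq A k | k <- enum 'I_l & (2 <= \rank (A k))%N] in
  (Rset = [::] \/ jsr Rset < jsr Aset) ->
  exists (n : nat) (idx : n.-tuple 'I_l),
    (1 <= n)%N /\
    (forall k : 'I_l, \rank (A k) = 1%N ->
       (count (fun i => A i == A k) idx <= 1)%N) /\
    jsr Aset = specrad (mxprod [seq A i | i <- idx]) `^ (n%:R^-1).
Proof.
move=> l0 Aset Rset hyp.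
have [t0 [J1 J2]] := jsr_spec Aset.
set t := jsr Aset in hyp t0 J1 J2 *.
have memA : forall k, A k \in Aset by move=> k; rewrite /Aset map_f ?mem_enum.
have word_idx : forall w, all (mem Aset) w -> exists ks : seq 'I_l, w = map A ks.
  elim => [|M w IH] /=; first by exists [::].
  move=> /andP [/mapP [k _ ->] /IH [ks ->]]; by exists (k :: ks).
have allA : forall ks : seq 'I_l, all (mem Aset) (map A ks).
  by move=> ks; apply/allP => M /mapP [k _ ->]; exact: memA.
have final : forall ks : seq 'I_l, (0 < size ks)%N -> adm (map A ks) ->
    specrad (mxprod (map A ks)) = t ^+ size ks ->
  exists (n : nat) (idx : n.-tuple 'I_l),
    (1 <= n)%N /\
    (forall k : 'I_l, \rank (A k) = 1%N ->
       (count (fun i => A i == A k) idx <= 1)%N) /\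
    jsr Aset = specrad (mxprod [seq A i | i <- idx]) `^ (n%:R^-1).
  move=> ks n0 aks e; exists (size ks), (in_tuple ks); split => //; split.
    by move=> k rk; have := aks (A k) rk; rewrite count_map.
  rewrite /= e; set y := (t ^+ size ks) `^ (size ks)%:R^-1.
  have yn : y ^+ size ks = t ^+ size ks by rewrite /y powR_root // exprn_ge0.
  apply/eqP; rewrite eq_le; apply/andP; split.
    by apply: (root_le n0) => //; [exact: powR_ge0 | rewrite yn].
  by apply: (root_le n0) => //; [exact: powR_ge0 | rewrite yn].
have [tz|tp] := eqVneq t 0.
  apply: (final [:: Ordinal l0]) => //.
    by move=> B _; rewrite /= addn0; case: (_ == _).
  have := spec_le (allA [:: Ordinal l0]) isT; rewrite -/t tz /= expr1 => h.
  by apply/eqP; rewrite eq_le h specrad_ge0.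
have tpos : 0 < t by rewrite lt_def tp t0.
suff [w [wS [wn [aw ew]]]] : exists w, all (mem Aset) w /\ (0 < size w)%N /\ adm w /\
    t ^+ size w <= specrad (mxprod w).
  have [ks eks] := word_idx w wS; subst w.
  move: wn ew; rewrite size_map => wn ew.
  apply: (final ks) => //.
  apply/eqP; rewrite eq_le ew andbT.
  by have := spec_le wS; rewrite size_map; apply.
apply: contrapT => Hn.
have H : forall w, all (mem Aset) w -> (0 < size w)%N -> adm w ->
    specrad (mxprod w) < t ^+ size w.
  move=> w wS wn aw; rewrite ltNge; apply/negP => h; apply: Hn; by exists w.
have inR : forall M, M \in Aset -> \rank M != 1%N -> M != 0 -> M \in Rset.
  move=> M /mapP [k _ ->] r1 n0; rewrite /Rset map_f // mem_filter mem_enum andbT.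
  rewrite -mxrank_eq0 in n0; move: r1 n0; case: (\rank (A k)) => [|[|r]] //.
have [c [KR [c0 [ct [K1 HX]]]]] : exists c KR, 0 < c /\ c < t /\ 1 <= KR /\
    (forall X : seq 'M[R[i]]_d, all (mem Aset) X -> ~~ has (fun B : 'M[R[i]]_d => \rank B == 1%N) X ->
       mxnorm (mxprod X) <= KR * c ^+ size X).
  have zero_case : forall (KR c : R) (X : seq 'M[R[i]]_d), 0 <= KR -> 0 <= c -> has (pred1 0) X ->
      mxnorm (mxprod X) <= KR * c ^+ size X.
    move=> K' c' X K0 c0 hz; rewrite (zero_prod hz).
    have -> : mxnorm (0 : 'M[R[i]]_d) = 0 by exact: mxnorm0.
    by apply: mulr_ge0 => //; apply: exprn_ge0.
  have toR : forall X : seq 'M[R[i]]_d, all (mem Aset) X -> ~~ has (fun B : 'M[R[i]]_d => \rank B == 1%N) X ->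
      ~~ has (pred1 0) X -> all (mem Rset) X.
    move=> X XS h1 h2; apply/allP => M MX; apply: inR.
    - exact: (allP XS).
    - by apply: contra h1 => h; apply/hasP; exists M.
    - by apply: contra h2 => /eqP h; apply/hasP; exists M => //=; rewrite h.
  case: hyp => [R0|st].
    exists (t / 2), 1; split; first by rewrite divr_gt0.
    split; first by rewrite ltr_pdivrMr //; lra.
    split => // X XS h1.
    have [hz|hz] := boolP (has (pred1 0) X).
      by apply: zero_case => //; rewrite ltW // divr_gt0.
    have := toR X XS h1 hz; rewrite R0; case: X {XS h1 hz} => [_|//].
    by rewrite mul1r expr0 /=; exact: mxnorm1.
  have [s0 [_ J2R]] := jsr_spec Rset.
  set s := jsr Rset in s0 J2R st.
  set c := (s + t) / 2.
  have sc : s < c by rewrite /c ltr_pdivlMr //; lra.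
  have ct : c < t by rewrite /c ltr_pdivrMr //; lra.
  have c0 : 0 < c by apply: le_lt_trans sc.
  have [N0 hN0] := J2R c sc.
  set KR := 1 + \sum_(m < N0) Fm Rset m / c ^+ m.
  have KR1 : 1 <= KR.
    by rewrite /KR lerDl; apply: sumr_ge0 => m _; rewrite divr_ge0 ?Fm_ge0 ?exprn_ge0 // ltW.
  exists c, KR; split => //; split => //; split => // X XS h1.
  have [hz|hz] := boolP (has (pred1 0) X).
    by apply: zero_case => //; [apply: le_trans KR1 | exact: ltW].
  have XR := toR X XS h1 hz.
  apply: le_trans (wordF XR) _.
  have cX : 0 < c ^+ size X by rewrite exprn_gt0.
  case: (leqP N0 (size X)) => hs.
    apply: le_trans (hN0 _ hs) _; rewrite ler_peMl //; exact: ltW.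
  rewrite -ler_pdivrMr //.
  apply: le_trans (ler_wpDl ler01 (le_refl _)).
  rewrite (bigD1 (Ordinal hs)) //=; apply: ler_wpDr => //.
  by apply: sumr_ge0 => m _; rewrite divr_ge0 ?Fm_ge0 ?exprn_ge0 // ltW.
set D := 1 + \sum_(B <- Aset) mxnorm B / c.
have D1 : 1 <= D.
  by rewrite /D lerDl; apply: sumr_ge0 => B _; rewrite divr_ge0 ?mxnorm_ge0 // ltW.
have HB : forall B, B \in Aset -> mxnorm B <= D * c.
  move=> B BS; rewrite -ler_pdivrMr //.
  apply: le_trans (ler_wpDl ler01 (le_refl _)).
  apply: (@sum_ge_term R d Aset (fun B => mxnorm B / c) B) => // x.
  by rewrite divr_ge0 ?mxnorm_ge0 // ltW.
have K0 : 0 <= KR by apply: le_trans K1.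
have D0 : 0 <= D by apply: le_trans D1.
set K2 := KR ^+ (size Aset).+1 * D ^+ size Aset.
have K20 : 0 <= K2 by rewrite mulr_ge0 ?exprn_ge0.
have Hadm : forall Y, all (mem Aset) Y -> adm Y -> mxnorm (mxprod Y) <= K2 * c ^+ size Y.
  move=> Y YS aY; apply: le_trans (bound_count K1 c0 D1 HB HX YS) _.
  apply: ler_wpM2r; first by rewrite exprn_ge0 // ltW.
  have hq := adm_count YS aY.
  apply: ler_pM; rewrite ?exprn_ge0 //; apply: expr_mono => //.
set c2 := (c + t) / 2.
have cc2 : c < c2 by rewrite /c2 ltr_pdivlMr //; lra.
have c2t : c2 < t by rewrite /c2 ltr_pdivrMr //; lra.
have [Q hQ] := geo_eventually (K2 * D) (ltW c0) cc2.
set sQ := flatten [seq map (@tval n 'I_l) (enum {: n.-tuple 'I_l}) | n <- iota 0 Q].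
have insQ : forall ks : seq 'I_l, (size ks < Q)%N -> ks \in sQ.
  move=> ks hs; apply/flatten_mapP; exists (size ks); first by rewrite mem_iota.
  by apply/mapP; exists (in_tuple ks) => //; rewrite mem_enum.
have [g1 [g1t hg1]] := @finmax R _ sQ
   (fun ks => (0 < size ks)%N /\ adm (map A ks))
   (fun ks => specrad (mxprod (map A ks)) `^ ((size ks)%:R^-1)) t
   ltac:(move=> ks _ [n0 aks]; rewrite ltNge; apply/negP => th;
         have := H _ (allA ks) ltac:(by rewrite size_map) aks; rewrite size_map;
         rewrite -(powR_root (specrad_ge0 (mxprod (map A ks))) n0) ltNge;
         move/negP; apply; apply: lerXn2r => //; rewrite nnegrE ?powR_ge0 //).
set g := Num.max c2 g1.
have gt : g < t by rewrite gt_max c2t g1t.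
have c2g : c2 <= g by rewrite le_max lexx.
have g0 : 0 < g by apply: lt_le_trans c2g; apply: lt_trans cc2.
have cg : c <= g by apply: le_trans c2g; exact: ltW.
have Hall := @bound_all R d Aset K2 g (ltW g0) K20.
have H1 : forall w, all (mem Aset) w -> adm w -> mxnorm (mxprod w) <= K2 * g ^+ size w.
  move=> w wS aw; apply: le_trans (Hadm w wS aw) _; apply: ler_wpM2l => //.
  by apply: lerXn2r; rewrite // nnegrE ltW.
have H2 : forall B Y k, B \in Aset -> \rank B = 1%N -> all (mem Aset) Y ->
    adm (Y ++ [:: B]) -> B *m mxprod Y *m B = k *: B -> cabs k <= g ^+ (size Y).+1.
  move=> B Y k BS rB YS aYB hk.
  have ek := rank1_eig rB hk.
  have eP : mxprod (Y ++ [:: B]) = mxprod Y *m B by rewrite mxprod_cat /= mulmx1.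
  case: (leqP Q (size Y).+1) => hs.
    apply: le_trans (eigen_le ek) _.
    apply: le_trans (mxnormM _ _) _.
    have aY : adm Y.
      move=> B' rB'; apply: leq_trans (aYB B' rB'); rewrite count_cat; exact: leq_addr.
    apply: (@le_trans _ _ ((K2 * c ^+ size Y) * (D * c))).
      apply: ler_pM; rewrite ?mxnorm_ge0 //; [exact: Hadm | exact: HB].
    apply: (@le_trans _ _ (c2 ^+ (size Y).+1)); last first.
      by apply: lerXn2r; rewrite // nnegrE ltW // (lt_trans c0).
    apply: le_trans (hQ _ hs); rewrite exprS.
    rewrite le_eqVlt; apply/orP; left; apply/eqP.
    by move: (c ^+ size Y) => z; ring.
  have YBS : all (mem Aset) (Y ++ [:: B]) by rewrite all_cat YS /= BS.
  have [ks eks] := word_idx _ YBS.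
  have sks : size ks = (size Y).+1 by rewrite -(size_map A) -eks size_cat addn1.
  have n0 : (0 < size ks)%N by rewrite sks.
  have aks : adm (map A ks) by rewrite -eks.
  have sQ' : (size ks < Q)%N by rewrite sks.
  have hks := hg1 ks (insQ ks sQ') (conj n0 aks).
  rewrite -eks eP in hks.
  apply: le_trans (specrad_ub ek) _.
  rewrite -(powR_root (specrad_ge0 (mxprod Y *m B)) n0) -sks.
  apply: lerXn2r; rewrite ?nnegrE ?powR_ge0 ?(ltW g0) //.
  by apply: le_trans hks _; rewrite le_max lexx orbT.
have Hw := Hall H1 H2.
have HF : forall m, Fm Aset m <= K2 * g ^+ m.
  move=> m; apply: Fm_le; first by rewrite mulr_ge0 // exprn_ge0 // ltW.
  by move=> w wS <-; exact: Hw.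
have K21 : 0 <= K2 + 1 by rewrite addr_ge0.
have [Q' hQ'] := geo_eventually (K2 + 1) (ltW g0) gt.
have m0 : (0 < Q'.+1)%N by [].
have h1 := J1 _ m0.
have h2 := HF Q'.+1.
have h3 := hQ' Q'.+1 (leqnSn Q').
have gm : 0 < g ^+ Q'.+1 by rewrite exprn_gt0.
have : t ^+ Q'.+1 <= K2 * g ^+ Q'.+1 by apply: le_trans h2.
move: h3 gm; set u := g ^+ Q'.+1; set v := t ^+ Q'.+1 => h3 gm h4.
have h5 := le_trans h3 h4.
rewrite mulrDr mulr1 [K2 * u]mulrC in h5.
lra.
Qed.
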